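(* Let $\delta\in\mathbb{Z}$ and let $\lambda,\mu$ be bipartitions. (i) $\mu\in\operatorname{Rem}^\bullet(\lambda)$ (equivalently $\lambda\in\operatorname{Add}^\bullet(\mu)$) if and only if the following holds. The labels of $x_\lambda(\delta)$ and $x_\mu(\delta)$ agree at all vertices except for one pair of adjacent vertices $j,j+1$. At that pair, the labels (read at $j$, then at $j+1$) are one of the following four cases: - $x_\mu(\delta)$ is $(\times,\bigcirc)$ and $x_\lambda(\delta)$ is $(\vee,\wedge)$; - $x_\mu(\delta)$ is $(\wedge,\bigcirc)$ and $x_\lambda(\delta)$ is $(\bigcirc,\wedge)$; - $x_\mu(\delta)$ is $(\times,\vee)$ and $x_\lambda(\delta)$ is $(\vee,\times)$; - $x_\mu(\delta)$ is $(\wedge,\vee)$ and $x_\lambda(\delta)$ is $(\bigcirc,\times)$. (ii) $\mu\in\operatorname{Rem}^\circ(\lambda)$ (equivalently $\lambda\in\operatorname{Add}^\circ(\mu)$) if and only if the following holds. The labels of $x_\lambda(\delta)$ and $x_\mu(\delta)$ agree at all vertices except for one pair of adjacent vertices $j,j+1$. At that pair, the labels are one of the following four cases: - $x_\mu(\delta)$ is $(\bigcirc,\times)$ and $x_\lambda(\delta)$ is $(\vee,\wedge)$; - $x_\mu(\delta)$ is $(\bigcirc,\vee)$ and $x_\lambda(\delta)$ is $(\vee,\bigcirc)$; - $x_\mu(\delta)$ is $(\wedge,\times)$ and $x_\lambda(\delta)$ is $(\times,\wedge)$; - $x_\mu(\delta)$ is $(\wedge,\vee)$ and $x_\lambda(\delta)$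 is $(\times,\bigcirc)$.
   Context: A partition is a weakly decreasing sequence $\alpha=(\alpha_1,\alpha_2,\dots)$ of nonnegative integers, almost all zero. A bipartition is a pair $\lambda=(\lambda^\bullet,\lambda^\circ)$ of partitions. $\operatorname{Add}^\bullet(\lambda)$ (resp. $\operatorname{Add}^\circ(\lambda)$) is the set of bipartitions obtained from $\lambda$ by adding one box to the Young diagram of $\lambda^\bullet$ (resp. $\lambda^\circ$). $\operatorname{Rem}^\bullet(\lambda)$ and $\operatorname{Rem}^\circ(\lambda)$ are defined likewise by removing one box. For a parameter $\delta$ and bipartition $\lambda$, set $I_\wedge(\lambda)=\{\lambda^\bullet_i-(i-1): i\ge1\}$ and $I_\vee(\lambda,\delta)=\{i-\delta-\lambda^\circ_i: i\ge1\}$. The weight diagram $x_\lambda(\delta)$ labels each integer vertex $j$ of the number line by: - $\bigcirc$ if $j\notin I_\wedge(\lambda)\cup I_\vee(\lambda,\delta)$; - $\wedge$ if $j\in I_\wedge(\lambda)\setminus I_\vee(\lambda,\delta)$; - $\vee$ if $j\in I_\vee(\lambda,\delta)\setminus I_\wedge(\lambda)$; - $\times$ if $j\in I_\wedge(\lambda)\cap I_\vee(\lambda,\delta)$. *)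

(* Defs.v *)
From Stdlib Require Import ZArith ClassicalEpsilon.
Open Scope Z_scope.

(* A partition alpha = (alpha_1, alpha_2, ...) is represented by a function
   a : nat -> nat with a k = alpha_{k+1} (0-based index). *)
Definition is_partition (a : nat -> nat) : Prop :=
  (forall k, (a (S k) <= a k)%nat) /\
  (exists N, forall k, (N <= k)%nat -> a k = 0%nat).

Definition bipartition : Type := ((nat -> nat) * (nat -> nat))%type.
Definition bullet (l : bipartition) : nat -> nat := fst l.
Definition circ (l : bipartition) : nat -> nat := snd l.

Definition is_bipartition (l : bipartition) : Prop :=
  is_partition (bullet l) /\ is_partition (circ l).

Definition remove_one_box (a b : nat -> nat) : Prop :=
  exists i, a i = S (b i) /\ forall k, k <> i -> a k = b k.

Definition Rem_bullet (lam mu : bipartition) : Prop :=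
  is_bipartition mu /\ remove_one_box (bullet lam) (bullet mu) /\
  (forall k, circ mu k = circ lam k).
Definition Rem_circ (lam mu : bipartition) : Prop :=
  is_bipartition mu /\ remove_one_box (circ lam) (circ mu) /\
  (forall k, bullet mu k = bullet lam k).

(* I_wedge(lambda) = { lambda^bullet_i - (i-1) : i >= 1 }  (i = k+1) *)
Definition I_wedge (l : bipartition) (j : Z) : Prop :=
  exists k : nat, j = Z.of_nat (bullet l k) - Z.of_nat k.
(* I_vee(lambda, delta) = { i - delta - lambda^circ_i : i >= 1 }  (i = k+1) *)
Definition I_vee (l : bipartition) (delta : Z) (j : Z) : Prop :=
  exists k : nat, j = Z.of_nat (S k) - delta - Z.of_nat (circ l k).

Inductive label : Type := LCirc | LWedge | LVee | LCross.

Definition weight (l : bipartition) (delta : Z) (j : Z) : label :=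
  if excluded_middle_informative (I_wedge l j) then
    (if excluded_middle_informative (I_vee l delta j) then LCross else LWedge)
  else
    (if excluded_middle_informative (I_vee l delta j) then LVee else LCirc).

Definition differ_at_pair (lam mu : bipartition) (delta : Z)
    (cases : label -> label -> label -> label -> Prop) : Prop :=
  exists j : Z,
    (forall k : Z, k <> j -> k <> j + 1 -> weight mu delta k = weight lam delta k) /\
    cases (weight mu delta j) (weight mu delta (j + 1))
          (weight lam delta j) (weight lam delta (j + 1)).

Definition cases_bullet (m0 m1 l0 l1 : label) : Prop :=
  (m0 = LCross /\ m1 = LCirc /\ l0 = LVee /\ l1 = LWedge) \/
  (m0 = LWedge /\ m1 = LCirc /\ l0 = LCirc /\ l1 = LWedge) \/
  (m0 = LCross /\ m1 = LVee /\ l0 = LVee /\ l1 = LCross) \/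
  (m0 = LWedge /\ m1 = LVee /\ l0 = LCirc /\ l1 = LCross).

Definition cases_circ (m0 m1 l0 l1 : label) : Prop :=
  (m0 = LCirc /\ m1 = LCross /\ l0 = LVee /\ l1 = LWedge) \/
  (m0 = LCirc /\ m1 = LVee /\ l0 = LVee /\ l1 = LCirc) \/
  (m0 = LWedge /\ m1 = LCross /\ l0 = LCross /\ l1 = LWedge) \/
  (m0 = LWedge /\ m1 = LVee /\ l0 = LCross /\ l1 = LCirc).

(* Main.v *)
Require Import Defs.
From Stdlib Require Import ZArith Lia Classical ClassicalEpsilon.
Open Scope Z_scope.

Definition sdec (f : nat -> Z) : Prop := forall k, f (S k) < f k.
Definition img (f : nat -> Z) (z : Z) : Prop := exists k, z = f k.

Lemma sdec_lt f : sdec f -> forall m n, (m < n)%nat -> f n < f m.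
Proof.
  intros H m n; induction n; intros Hl; [lia|].
  destruct (Nat.eq_dec m n); [subst; apply H|].
  specialize (IHn ltac:(lia)); specialize (H n); lia.
Qed.

Lemma sdec_le f : sdec f -> forall m n, (m <= n)%nat -> f n <= f m.
Proof.
  intros H m n Hl. destruct (Nat.eq_dec m n); [subst; lia|].
  pose proof (sdec_lt f H m n ltac:(lia)); lia.
Qed.

Lemma sdec_inj f : sdec f -> forall m n, f m = f n -> m = n.
Proof.
  intros H m n E. destruct (lt_eq_lt_dec m n) as [[h|h]|h]; auto.
  - pose proof (sdec_lt f H m n h); lia.
  - pose proof (sdec_lt f H n m h); lia.
Qed.

Lemma dec_eq f g : sdec f -> sdec g -> (forall z, img f z <-> img g z) ->
  forall k, f k = g k.
Proof.
  intros Hf Hg Hi.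
  assert (forall n k, (k < n)%nat -> f k = g k); [|intros k; apply (H (S k)); lia].
  induction n; intros k Hk; [lia|].
  destruct (Nat.eq_dec k n); [subst|apply IHn; lia].
  destruct (proj1 (Hi (f n)) (ex_intro _ n eq_refl)) as [m Hm].
  destruct (proj2 (Hi (g n)) (ex_intro _ n eq_refl)) as [p Hp].
  assert (n <= m)%nat.
  { destruct (le_lt_dec n m); auto. rewrite <- (IHn m) in Hm by lia.
    apply sdec_inj in Hm; auto; lia. }
  assert (n <= p)%nat.
  { destruct (le_lt_dec n p); auto. rewrite (IHn p) in Hp by lia.
    apply sdec_inj in Hp; auto; lia. }
  pose proof (sdec_le g Hg n m H). pose proof (sdec_le f Hf n p H0). lia.
Qed.

Lemma fwd a b i : sdec a -> sdec b -> a i = b i + 1 ->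
  (forall k, k <> i -> a k = b k) ->
  ~ img a (b i) /\ forall z, img b z <-> (img a z /\ z <> a i) \/ z = b i.
Proof.
  intros Ha Hb Hi Ho. split.
  - intros [k Hk]. destruct (lt_eq_lt_dec k i) as [[h|h]|h].
    + pose proof (sdec_lt a Ha k i h); lia.
    + subst; lia.
    + rewrite Ho in Hk by lia. pose proof (sdec_lt b Hb i k h); lia.
  - intros z; split.
    + intros [k Hk]. destruct (Nat.eq_dec k i); [subst; auto|].
      left. split; [exists k; rewrite Ho; auto|].
      intro E. rewrite <- Ho in Hk by auto. subst.
      apply n. apply (sdec_inj a Ha); auto.
    + intros [[[k Hk] Hne]|E]; [|exists i; auto].
      destruct (Nat.eq_dec k i); [subst; tauto|]. exists k; rewrite <- Ho; auto.
Qed.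

Lemma bwd a b j : sdec a -> sdec b -> img a (j+1) -> ~ img a j ->
  (forall z, img b z <-> (img a z /\ z <> j+1) \/ z = j) ->
  exists i, a i = j+1 /\ b i = j /\ forall k, k <> i -> a k = b k.
Proof.
  intros Ha Hb [i Hi] Hnj Hbz.
  set (a' := fun k => if Nat.eq_dec k i then j else a k).
  assert (Hs : sdec a').
  { intro k. unfold a'. destruct (Nat.eq_dec (S k) i); destruct (Nat.eq_dec k i); try lia.
    - pose proof (Ha k); subst; lia.
    - subst. pose proof (Ha i). assert (a (S i) <> j) by (intro E; apply Hnj; exists (S i); auto).
      lia.
    - apply Ha. }
  assert (Himg : forall z, img a' z <-> img b z).
  { intro z. rewrite Hbz. unfold a'. split.
    - intros [k Hk]. destruct (Nat.eq_dec k i); [auto|]. left. split; [exists k; auto|].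
      intro E. subst z. apply n. apply (sdec_inj a Ha); lia.
    - intros [[[k Hk] Hne]|E].
      + exists k. destruct (Nat.eq_dec k i); [subst; lia|auto].
      + exists i. destruct (Nat.eq_dec i i); [auto|lia]. }
  pose proof (dec_eq a' b Hs Hb Himg) as E.
  exists i. split; [lia|]. split.
  - rewrite <- E. unfold a'. destruct (Nat.eq_dec i i); lia.
  - intros k Hk. rewrite <- E. unfold a'. destruct (Nat.eq_dec k i); lia.
Qed.

Definition lab (p q : Prop) : label :=
  if excluded_middle_informative p then
    (if excluded_middle_informative q then LCross else LWedge)
  else (if excluded_middle_informative q then LVee else LCirc).

Lemma lab_inv p q x : lab p q = x ->
  match x with LCross => p /\ q | LWedge => p /\ ~q | LVee => ~p /\ q
  | LCirc => ~p /\ ~q end.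
Proof.
  unfold lab; destruct (excluded_middle_informative p);
  destruct (excluded_middle_informative q); intros <-; tauto.
Qed.

Lemma lab_eq p q p' q' : lab p q = lab p' q' -> (p <-> p') /\ (q <-> q').
Proof.
  unfold lab; destruct (excluded_middle_informative p);
  destruct (excluded_middle_informative q);
  destruct (excluded_middle_informative p');
  destruct (excluded_middle_informative q'); intro H; try discriminate; tauto.
Qed.

Lemma lab_ext p q p' q' : (p <-> p') -> (q <-> q') -> lab p q = lab p' q'.
Proof.
  unfold lab; intros; destruct (excluded_middle_informative p);
  destruct (excluded_middle_informative q);
  destruct (excluded_middle_informative p');
  destruct (excluded_middle_informative q'); tauto.
Qed.

Lemma lab_val p q : lab p q =
  match excluded_middle_informative p, excluded_middle_informative q with
  | left _, left _ => LCross | left _, right _ => LWedge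
  | right _, left _ => LVee | right _, right _ => LCirc end.
Proof. unfold lab; destruct (excluded_middle_informative p); destruct (excluded_middle_informative q); auto. Qed.

Lemma labTT (p q : Prop) : p -> q -> lab p q = LCross.
Proof. intros; unfold lab; destruct (excluded_middle_informative p); destruct (excluded_middle_informative q); tauto. Qed.
Lemma labTF (p q : Prop) : p -> ~q -> lab p q = LWedge.
Proof. intros; unfold lab; destruct (excluded_middle_informative p); destruct (excluded_middle_informative q); tauto. Qed.
Lemma labFT (p q : Prop) : ~p -> q -> lab p q = LVee.
Proof. intros; unfold lab; destruct (excluded_middle_informative p); destruct (excluded_middle_informative q); tauto. Qed.
Lemma labFF (p q : Prop) : ~p -> ~q -> lab p q = LCirc.
Proof. intros; unfold lab; destruct (excluded_middle_informative p); destruct (excluded_middle_informative q); tauto. Qed.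

Ltac inv_all :=
  repeat match goal with
  | H : lab _ _ = ?x |- _ => apply lab_inv in H; simpl in H
  | H : _ /\ _ |- _ => destruct H
  end.

Lemma pair_bullet (Pl Pm Ql Qm : Z -> Prop) :
  (exists j, (forall k, k <> j -> k <> j+1 -> lab (Pm k) (Qm k) = lab (Pl k) (Ql k)) /\
     cases_bullet (lab (Pm j) (Qm j)) (lab (Pm (j+1)) (Qm (j+1)))
                  (lab (Pl j) (Ql j)) (lab (Pl (j+1)) (Ql (j+1)))) <->
  exists j, ~ Pl j /\ Pl (j+1) /\ (forall z, Pm z <-> (Pl z /\ z <> j+1) \/ z = j) /\
     (forall z, Qm z <-> Ql z).
Proof.
  split.
  - intros [j [Heq Hc]].
    assert (Hd : j + 1 <> j) by lia.
    unfold cases_bullet in Hc.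
    destruct Hc as [Hc|[Hc|[Hc|Hc]]]; inv_all; exists j;
    (split; [auto|split; [auto|split]]);
    intro z; destruct (Z.eq_dec z j) as [ee|n]; try (subst; intuition congruence);
    destruct (Z.eq_dec z (j+1)) as [e2|n0]; try (subst; intuition congruence);
    destruct (lab_eq _ _ _ _ (Heq z n n0)); tauto.
  - intros [j [H1 [H2 [H3 H4]]]]. exists j. split.
    + intros k Hk Hk1. apply lab_ext; [rewrite H3|apply H4]; tauto.
    + assert (Hd : j + 1 <> j) by lia.
      assert (Pm j) by (apply H3; auto).
      assert (~ Pm (j+1)) by (rewrite H3; tauto).
      unfold cases_bullet.
      destruct (classic (Ql j)); destruct (classic (Ql (j+1))).
      * right; right; left. rewrite (labTT (Pm j)), (labFT (Pm (j+1))), (labFT (Pl j)), (labTT (Pl (j+1))); firstorder.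
      * left. rewrite (labTT (Pm j)), (labFF (Pm (j+1))), (labFT (Pl j)), (labTF (Pl (j+1))); firstorder.
      * right; right; right. rewrite (labTF (Pm j)), (labFT (Pm (j+1))), (labFF (Pl j)), (labTT (Pl (j+1))); firstorder.
      * right; left. rewrite (labTF (Pm j)), (labFF (Pm (j+1))), (labFF (Pl j)), (labTF (Pl (j+1))); firstorder.
Qed.

Lemma pair_circ (Pl Pm Ql Qm : Z -> Prop) :
  (exists j, (forall k, k <> j -> k <> j+1 -> lab (Pm k) (Qm k) = lab (Pl k) (Ql k)) /\
     cases_circ (lab (Pm j) (Qm j)) (lab (Pm (j+1)) (Qm (j+1)))
                  (lab (Pl j) (Ql j)) (lab (Pl (j+1)) (Ql (j+1)))) <->
  exists j, Ql j /\ ~ Ql (j+1) /\ (forall z, Qm z <-> (Ql z /\ z <> j) \/ z = j+1) /\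
     (forall z, Pm z <-> Pl z).
Proof.
  split.
  - intros [j [Heq Hc]].
    assert (Hd : j + 1 <> j) by lia.
    unfold cases_circ in Hc.
    destruct Hc as [Hc|[Hc|[Hc|Hc]]]; inv_all; exists j;
    (split; [auto|split; [auto|split]]);
    intro z; destruct (Z.eq_dec z j) as [ee|n]; try (subst; intuition congruence);
    destruct (Z.eq_dec z (j+1)) as [e2|n0]; try (subst; intuition congruence);
    destruct (lab_eq _ _ _ _ (Heq z n n0)); tauto.
  - intros [j [H1 [H2 [H3 H4]]]]. exists j. split.
    + intros k Hk Hk1. apply lab_ext; [apply H4|rewrite H3]; tauto.
    + assert (Hd : j + 1 <> j) by lia.
      assert (Qm (j+1)) by (apply H3; auto).
      assert (~ Qm j) by (rewrite H3; lia || tauto).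
      unfold cases_circ.
      destruct (classic (Pl j)); destruct (classic (Pl (j+1))).
      * right; right; left. rewrite (labTF (Pm j)), (labTT (Pm (j+1))), (labTT (Pl j)), (labTF (Pl (j+1))); firstorder congruence.
      * right; right; right. rewrite (labTF (Pm j)), (labFT (Pm (j+1))), (labTT (Pl j)), (labFF (Pl (j+1))); firstorder congruence.
      * left. rewrite (labFF (Pm j)), (labTT (Pm (j+1))), (labFT (Pl j)), (labTF (Pl (j+1))); firstorder congruence.
      * right; left. rewrite (labFF (Pm j)), (labFT (Pm (j+1))), (labFT (Pl j)), (labFF (Pl (j+1))); firstorder congruence.
Qed.

Definition wseq (l : bipartition) k := Z.of_nat (bullet l k) - Z.of_nat k.
Definition vseq (l : bipartition) (d : Z) k := - (Z.of_nat (S k) - d - Z.of_nat (circ l k)).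

Lemma wseq_sdec l : is_bipartition l -> sdec (wseq l).
Proof. intros [[H _] _] k. unfold wseq. specialize (H k). lia. Qed.
Lemma vseq_sdec l d : is_bipartition l -> sdec (vseq l d).
Proof. intros [_ [H _]] k. unfold vseq. specialize (H k). lia. Qed.

Lemma wedge_img l z : I_wedge l z <-> img (wseq l) z.
Proof. reflexivity. Qed.
Lemma vee_img l d z : I_vee l d z <-> img (vseq l d) (-z).
Proof. unfold vseq; split; intros [k H]; exists k; lia. Qed.

Theorem proposition2p1 (delta : Z) (lam mu : bipartition) :
  is_bipartition lam -> is_bipartition mu ->
  (Rem_bullet lam mu <-> differ_at_pair lam mu delta cases_bullet) /\
  (Rem_circ lam mu <-> differ_at_pair lam mu delta cases_circ).
Proof.
  intros Hl Hm.
  pose proof (wseq_sdec lam Hl) as Swl. pose proof (wseq_sdec mu Hm) as Swm.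
  pose proof (vseq_sdec lam delta Hl) as Svl. pose proof (vseq_sdec mu delta Hm) as Svm.
  split.
  - change (Rem_bullet lam mu <-> exists j,
      (forall k, k <> j -> k <> j+1 -> lab (I_wedge mu k) (I_vee mu delta k) = lab (I_wedge lam k) (I_vee lam delta k)) /\
      cases_bullet (lab (I_wedge mu j) (I_vee mu delta j)) (lab (I_wedge mu (j+1)) (I_vee mu delta (j+1)))
        (lab (I_wedge lam j) (I_vee lam delta j)) (lab (I_wedge lam (j+1)) (I_vee lam delta (j+1)))).
    rewrite pair_bullet. split.
    + intros [_ [[i [Hi Ho]] Hc]].
      destruct (fwd (wseq lam) (wseq mu) i Swl Swm) as [Hn Hz].
      { unfold wseq; lia. }
      { intros k Hk; unfold wseq; rewrite Ho; auto. }
      exists (wseq mu i). split; [exact Hn|]. split.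
      { exists i. unfold wseq in *; lia. }
      split.
      * intro z. rewrite !wedge_img, Hz. assert (wseq lam i = wseq mu i + 1) by (unfold wseq; lia). rewrite H. tauto.
      * intro z. unfold I_vee. split; intros [k Hk]; exists k; rewrite Hk, Hc; auto.
    + intros [j [H1 [H2 [H3 H4]]]].
      destruct (bwd (wseq lam) (wseq mu) j Swl Swm H2 H1 H3) as [i [Ha [Hb Hk]]].
      split; [exact Hm|]. split.
      * exists i. unfold wseq in *. split; [lia|]. intros k Hki. specialize (Hk k Hki). lia.
      * assert (E : forall k, vseq lam delta k = vseq mu delta k).
        { apply dec_eq; auto. intro z. rewrite <- (Z.opp_involutive z), <- !vee_img. symmetry; apply H4. }
        intro k. specialize (E k). unfold vseq in E. lia.
  - change (Rem_circ lam mu <-> exists j,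
      (forall k, k <> j -> k <> j+1 -> lab (I_wedge mu k) (I_vee mu delta k) = lab (I_wedge lam k) (I_vee lam delta k)) /\
      cases_circ (lab (I_wedge mu j) (I_vee mu delta j)) (lab (I_wedge mu (j+1)) (I_vee mu delta (j+1)))
        (lab (I_wedge lam j) (I_vee lam delta j)) (lab (I_wedge lam (j+1)) (I_vee lam delta (j+1)))).
    rewrite pair_circ. split.
    + intros [_ [[i [Hi Ho]] Hc]].
      destruct (fwd (vseq lam delta) (vseq mu delta) i Svl Svm) as [Hn Hz].
      { unfold vseq; lia. }
      { intros k Hk; unfold vseq; rewrite Ho; auto. }
      exists (- vseq lam delta i). split; [|split].
      { rewrite vee_img, Z.opp_involutive. exists i; auto. }
      { rewrite vee_img. assert (- (- vseq lam delta i + 1) = vseq mu delta i) by (unfold vseq in *; lia).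
        rewrite H; exact Hn. }
      split.
      * intro z. rewrite !vee_img, Hz.
        assert (- vseq mu delta i = - vseq lam delta i + 1) by (unfold vseq; lia).
        split; (intros [[A B]|B]; [left; split; [exact A|lia]|right; lia]).
      * intro z. unfold I_wedge. split; intros [k Hk]; exists k; rewrite Hk, Hc; auto.
    + intros [j [H1 [H2 [H3 H4]]]].
      destruct (bwd (vseq lam delta) (vseq mu delta) (-j-1) Svl Svm) as [i [Ha [Hb Hk]]].
      { replace (-j-1+1) with (-j) by lia. rewrite <- vee_img; exact H1. }
      { replace (-j-1) with (-(j+1)) by lia. rewrite <- vee_img; exact H2. }
      { intro z. rewrite <- (Z.opp_involutive z), <- !vee_img, H3.
        split; (intros [[A B]|B]; [left; split; [exact A|lia]|right; lia]). }
      split; [exact Hm|]. split.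
      * exists i. unfold vseq in *. split; [lia|]. intros k Hki. specialize (Hk k Hki). lia.
      * assert (E : forall k, wseq mu k = wseq lam k).
        { apply dec_eq; auto. }
        intro k. specialize (E k). unfold wseq in E. lia.
Qed.
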